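(* Let $\mathcal{S}$ be a subspace of $\mathbb{C}^n$. Let $\mathcal{D}^+_n$ be the set of $n\times n$ positive definite diagonal matrices and $\mathcal{D}^+_{0,n}$ the set of $n\times n$ positive semidefinite diagonal matrices. Then $$\sup_{D\in\mathcal{D}^+_n}\|P_{D,\mathcal{S}}\|=\sup_{D\in\mathcal{D}^+_{0,n}}\|P_{D,\mathcal{S}}\|.$$
   Context: Norms are operator norms for the Euclidean norm. For a positive semidefinite matrix $D$ and a subspace $\mathcal{S}$ of $\mathbb{C}^n$, write $D=\begin{pmatrix} a & b\\ b^* & c\end{pmatrix}$ with respect to $\mathcal{S}\oplus\mathcal{S}^\perp$; then $P_{D,\mathcal{S}}:=\begin{pmatrix} 1 & a^\dagger b\\ 0&0\end{pmatrix}$ ($a^\dagger$ Moore–Penrose inverse), an idempotent with range $\mathcal{S}$ satisfying $DP_{D,\mathcal{S}}=P_{D,\mathcal{S}}^*D$, of minimal norm among such idempotents. *)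

(* Defs.v *)
From HB Require Import structures.
From mathcomp Require Import all_boot all_order all_algebra.
From mathcomp Require Import complex.
From mathcomp Require Import boolp classical_sets reals constructive_ereal ereal.

Set Implicit Arguments.
Unset Strict Implicit.
Unset Printing Implicit Defensive.

Import Order.TTheory GRing.Theory Num.Theory.
Local Open Scope ring_scope.
Local Open Scope classical_set_scope.

Section Defs.
Variable R : realType.
Local Notation C := (complex R).

Definition adjmx m n (A : 'M[C]_(m, n)) : 'M[C]_(n, m) :=
  map_mx (@conjc R) A^T.

Definition is_MPinv m n (A : 'M[C]_(m, n)) (X : 'M[C]_(n, m)) : Prop :=
  [/\ A *m X *m A = A, X *m A *m X = X,
      adjmx (A *m X) = A *m X & adjmx (X *m A) = X *m A].

Definition MPinv m n (A : 'M[C]_(m, n)) : 'M[C]_(n, m) :=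
  match pselect (exists X, is_MPinv A X) with
  | left h => projT1 (cid h)
  | right _ => 0
  end.

Definition is_orthoproj n (S : {vspace 'cV[C]_n}) (Q : 'M[C]_n) : Prop :=
  [/\ adjmx Q = Q, Q *m Q = Q,
      (forall x : 'cV[C]_n, (Q *m x) \in S) &
      (forall x : 'cV[C]_n, x \in S -> Q *m x = x)].

Definition orthoproj n (S : {vspace 'cV[C]_n}) : 'M[C]_n :=
  match pselect (exists Q, is_orthoproj S Q) with
  | left h => projT1 (cid h)
  | right _ => 0
  end.

(* P_{D,S} = [[1, a^+ b],[0,0]] w.r.t. S (+) S^perp, written with the
   orthogonal projection Q onto S:  a = Q D Q (restricted to S),
   b = Q D (1 - Q) (restricted to S^perp), so
   P_{D,S} = Q + (Q D Q)^+ D (1 - Q). *)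
Definition PDS n (D : 'M[C]_n) (S : {vspace 'cV[C]_n}) : 'M[C]_n :=
  let Q := orthoproj S in
  Q + MPinv (Q *m D *m Q) *m D *m (1%:M - Q).

Definition vnorm n (x : 'cV[C]_n) : R :=
  Num.sqrt (\sum_i (ComplexField.Normc.normc (x i 0)) ^+ 2).

Definition opnorm n (A : 'M[C]_n) : \bar R :=
  ereal_sup [set (vnorm (A *m x))%:E | x in [set x : 'cV[C]_n | vnorm x = 1]].

Definition posdef_diag n (D : 'M[C]_n) : Prop :=
  is_diag_mx D /\ forall i, 0 < D i i.
Definition psd_diag n (D : 'M[C]_n) : Prop :=
  is_diag_mx D /\ forall i, 0 <= D i i.

End Defs.

(* Main.v *)
Require Import Defs.
From HB Require Import structures.
From mathcomp Require Import all_boot all_order all_algebra.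
From mathcomp Require Import complex.
From mathcomp Require Import boolp classical_sets reals constructive_ereal ereal.
From mathcomp Require Import ring lra.
Import Order.TTheory GRing.Theory Num.Theory.
Set Implicit Arguments.
Unset Strict Implicit.
Unset Printing Implicit Defensive.
Local Open Scope ring_scope.
Local Open Scope complex_scope.

Section S.
Variable R : realType.
Local Notation C := (complex R).

Lemma adjmxK m n (A : 'M[C]_(m,n)) : adjmx (adjmx A) = A.
Proof. by apply/matrixP=> i j; rewrite !mxE conjcK. Qed.

Lemma adjmxM m n p (A : 'M[C]_(m,n)) (B : 'M[C]_(n,p)) :
  adjmx (A *m B) = adjmx B *m adjmx A.
Proof. by rewrite /adjmx trmx_mul map_mxM. Qed.

Lemma adjmxD m n (A B : 'M[C]_(m,n)) : adjmx (A + B) = adjmx A + adjmx B.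
Proof. by apply/matrixP=> i j; rewrite !mxE rmorphD. Qed.

Lemma adjmxN m n (A : 'M[C]_(m,n)) : adjmx (- A) = - adjmx A.
Proof. by apply/matrixP=> i j; rewrite !mxE rmorphN. Qed.

Lemma adjmxB m n (A B : 'M[C]_(m,n)) : adjmx (A - B) = adjmx A - adjmx B.
Proof. by rewrite adjmxD adjmxN. Qed.

Lemma adjmxZr m n (r : R) (A : 'M[C]_(m,n)) : adjmx (r%:C *: A) = r%:C *: adjmx A.
Proof. by apply/matrixP=> i j; rewrite !mxE rmorphM /= oppr0. Qed.

Lemma adjmx1 n : adjmx (1%:M : 'M[C]_n) = 1%:M.
Proof. by apply/matrixP=> i j; rewrite !mxE conjc_nat eq_sym. Qed.

Lemma adjmx_inv n (A : 'M[C]_n) : adjmx (invmx A) = invmx (adjmx A).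
Proof. by rewrite /adjmx trmx_inv map_invmx. Qed.


Lemma adj_mul_eq0 m p (M : 'M[C]_(m,p)) : adjmx M *m M = 0 -> M = 0.
Proof.
move=> H; apply/matrixP=> i j; rewrite mxE.
have := congr1 (fun N : 'M[C]_p => N j j) H; rewrite !mxE.
move=> Hs.
have Hpos : forall k : 'I_m, true -> 0 <= adjmx M j k * M k j.
  by move=> k _; rewrite !mxE mulrC mulcJ_ge0.
have := Num.Theory.psumr_eq0P Hpos Hs (i:=i) isT.
rewrite !mxE => /eqP; rewrite mulf_eq0 conjc_eq0 orbb => /eqP //.
Qed.

Lemma inj_unit r (N : 'M[C]_r) : (forall z : 'cV_r, N *m z = 0 -> z = 0) -> N \in unitmx.
Proof.
move=> Hinj; rewrite -unitmx_tr -row_free_unit -kermx_eq0; apply/eqP/row_matrixP => k.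
rewrite row0; apply: trmx_inj; rewrite trmx0; apply: Hinj.
apply: trmx_inj; rewrite trmx_mul trmxK trmx0 -row_mul mulmx_ker row0 //.
Qed.

Lemma gram_unit m r (F : 'M[C]_(m,r)) : (forall z : 'cV_r, F *m z = 0 -> z = 0) ->
  (adjmx F *m F) \in unitmx.
Proof.
move=> Hinj; apply: inj_unit => z Hz; apply: Hinj; apply: adj_mul_eq0.
by rewrite adjmxM -mulmxA (mulmxA (adjmx F)) Hz mulmx0.
Qed.

Lemma MP_fact m n r (A : 'M[C]_(m,n)) (F : 'M[C]_(m,r)) (G : 'M[C]_(r,n)) :
  A = F *m G -> (forall z : 'cV_r, F *m z = 0 -> z = 0) ->
  (forall z : 'cV_r, adjmx G *m z = 0 -> z = 0) -> exists X, is_MPinv A X.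
Proof.
move=> hA Finj Ginj.
set MF := adjmx F *m F; set MG := G *m adjmx G.
have uF : MF \in unitmx by apply: gram_unit.
have uG : MG \in unitmx by rewrite /MG -{1}[G]adjmxK; apply: gram_unit.
have hMF : adjmx MF = MF by rewrite /MF adjmxM adjmxK.
have hMG : adjmx MG = MG by rewrite /MG adjmxM adjmxK.
set X := adjmx G *m invmx MG *m invmx MF *m adjmx F.
have hV1 : MG *m invmx MG = 1%:M := mulmxV uG.
have hV2 : invmx MF *m MF = 1%:M := mulVmx uF.
have hAX : A *m X = F *m (invmx MF *m adjmx F).
  by rewrite hA /X -!mulmxA (mulmxA G) -/MG (mulmxA MG) hV1 mul1mx.
have hXA : X *m A = adjmx G *m invmx MG *m G.
  by rewrite hA /X !mulmxA -(mulmxA _ (adjmx F)) -/MF -(mulmxA _ (invmx MF) MF) hV2 mulmx1.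
exists X; split.
- by rewrite hAX hA !mulmxA -(mulmxA _ (adjmx F)) -/MF -(mulmxA _ (invmx MF) MF) hV2 mulmx1.
- by rewrite hXA /X !mulmxA -(mulmxA _ G (adjmx G)) -/MG -(mulmxA _ MG (invmx MG)) hV1 mulmx1.
- by rewrite hAX adjmxM adjmxM adjmxK adjmx_inv hMF mulmxA.
- by rewrite hXA adjmxM adjmxM adjmxK adjmx_inv hMG mulmxA.
Qed.

Lemma MP_exists m n (A : 'M[C]_(m,n)) : exists X, is_MPinv A X.
Proof.
apply: (@MP_fact _ _ _ A (col_base A) (row_base A)); first by rewrite mulmx_base.
  move=> z Hz; case/row_fullP: (col_base_full A) => B HB.
  by rewrite -[z]mul1mx -HB -mulmxA Hz mulmx0.
move=> z Hz.
have Hz' : adjmx z = 0.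
  apply: (row_free_inj (row_base_free A)); rewrite /= mul0mx -[row_base A]adjmxK -adjmxM Hz.
  by apply/matrixP=> i j; rewrite !mxE conjc0.
by rewrite -[z]adjmxK Hz'; apply/matrixP=> i j; rewrite !mxE conjc0.
Qed.


Lemma MPinvP m n (A : 'M[C]_(m,n)) : is_MPinv A (MPinv A).
Proof.
rewrite /MPinv; case: pselect => [h|h]; first exact: (projT2 (cid h)).
by exfalso; apply: h; apply: MP_exists.
Qed.

Lemma MP_adj m n (A : 'M[C]_(m,n)) X : is_MPinv A X -> is_MPinv (adjmx A) (adjmx X).
Proof.
case=> h1 h2 h3 h4; split.
- by rewrite -!adjmxM mulmxA h1.
- by rewrite -!adjmxM mulmxA h2.
- by rewrite -adjmxM h4 h4.
- by rewrite -adjmxM h3 h3.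
Qed.

Lemma MP_id1 m n (A : 'M[C]_(m,n)) X : is_MPinv A X -> X = adjmx A *m adjmx X *m X.
Proof. by case=> h1 h2 h3 h4; rewrite -adjmxM h4 -{1}h2. Qed.

Lemma MP_id2 m n (A : 'M[C]_(m,n)) X : is_MPinv A X -> X = X *m adjmx X *m adjmx A.
Proof. by case=> h1 h2 h3 h4; rewrite -mulmxA -adjmxM h3 mulmxA h2. Qed.

Definition ip {n} (u v : 'cV[C]_n) : C := (adjmx u *m v) 0 0.

Definition nsqR {n} (x : 'cV[C]_n) : R := \sum_i ComplexField.Normc.normc (x i 0) ^+ 2.

Lemma nsqRE n (x : 'cV[C]_n) : (nsqR x)%:C = ip x x.
Proof.
rewrite /nsqR /ip rmorph_sum /= mxE; apply: eq_bigr => i _.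
rewrite rmorphXn /= !mxE mulrC.
have -> : (ComplexField.Normc.normc (x i 0))%:C = `|x i 0| by [].
by rewrite sqr_normc.
Qed.

Lemma nsqR_ge0 n (x : 'cV[C]_n) : 0 <= nsqR x.
Proof. by apply: sumr_ge0 => i _; rewrite sqr_ge0. Qed.

Lemma ip_ge0 n (x : 'cV[C]_n) : 0 <= ip x x.
Proof. by rewrite -nsqRE lecR nsqR_ge0. Qed.

Lemma ip_eq0 n (x : 'cV[C]_n) : ip x x = 0 -> x = 0.
Proof.
move=> h; apply: adj_mul_eq0; apply/matrixP => i j.
by rewrite !ord1 [RHS]mxE; exact: h.
Qed.

Lemma vnorm_sq n (x : 'cV[C]_n) : vnorm x ^+ 2 = nsqR x.
Proof. by rewrite /vnorm sqr_sqrtr // nsqR_ge0. Qed.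

Lemma vnorm_ge0 n (x : 'cV[C]_n) : 0 <= vnorm x.
Proof. by rewrite /vnorm sqrtr_ge0. Qed.


Lemma nsqR_scale n (c : R) (x : 'cV[C]_n) : nsqR (c%:C *: x) = c ^+ 2 * nsqR x.
Proof.
apply: (@complexI R); rewrite nsqRE /ip adjmxZr -scalemxAl -scalemxAr !mxE.
rewrite rmorphM rmorphXn /= nsqRE /ip mulrA -expr2. by rewrite [in RHS]mxE.
Qed.

Lemma young (s a b d : R) : 0 < d -> 0 <= a -> 0 <= b -> 0 <= s -> s <= a + b ->
  s ^+ 2 <= (1 + d) * a ^+ 2 + (1 + d^-1) * b ^+ 2.
Proof.
move=> d0 a0 b0 s0 sab.
have h1 : s ^+ 2 <= (a + b) ^+ 2 by nra.
have h2 : 0 <= d^-1 * (d * a - b) ^+ 2 by apply: mulr_ge0; [rewrite invr_ge0; exact: ltW | exact: sqr_ge0].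
have h3 : d^-1 * (d * a - b) ^+ 2 = d * a ^+ 2 + d^-1 * b ^+ 2 - 2 * a * b.
  by field; rewrite gt_eqF.
apply: (le_trans h1); rewrite h3 in h2; nra.
Qed.

Lemma nsqR_young n (a b : 'cV[C]_n) (d : R) : 0 < d ->
  nsqR (a + b) <= (1 + d) * nsqR a + (1 + d^-1) * nsqR b.
Proof.
move=> d0; rewrite /nsqR !mulr_sumr -big_split /=; apply: ler_sum => i _.
rewrite !mxE; apply: young => //.
- exact: (@normr_ge0 _ (Rcomplex R)).
- exact: (@normr_ge0 _ (Rcomplex R)).
- exact: (@normr_ge0 _ (Rcomplex R)).
- exact: (@ler_normD _ (Rcomplex R)).
Qed.

Lemma lim_le (a b K : R) : 0 <= b -> 0 <= K ->
  (forall e, 0 < e -> e <= 1 -> a <= (1 + e) * b + e * K) -> a <= b.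
Proof.
move=> b0 K0 H; apply/ler_addgt0Pr => d d0.
set e := Num.min 1 (d / (b + K + 1)).
have bK : 0 < b + K + 1 by lra.
have e0 : 0 < e by rewrite lt_min ltr01 divr_gt0.
have e1 : e <= 1 by rewrite ge_min lexx.
have e2 : e * (b + K + 1) <= d.
  rewrite -ler_pdivlMr //; by rewrite ge_min lexx orbT.
have := H e e0 e1; nra.
Qed.


Lemma conj_ge0_id (z : C) : 0 <= z -> z^* = z.
Proof. by case: z => a b; rewrite lecE /= => /andP[/eqP -> _]; rewrite oppr0. Qed.

Lemma mul_diag_r n p (M : 'M[C]_(p,n)) (D : 'M[C]_n) i k :
  is_diag_mx D -> (M *m D) i k = M i k * D k k.
Proof.
move=> /is_diag_mxP hD; rewrite mxE (bigD1 k) //= big1 ?addr0 // => j hj.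
by rewrite hD ?mulr0 //.
Qed.

Lemma mul_diag_l n p (M : 'M[C]_(n,p)) (D : 'M[C]_n) i k :
  is_diag_mx D -> (D *m M) i k = D i i * M i k.
Proof.
move=> /is_diag_mxP hD; rewrite mxE (bigD1 i) //= big1 ?addr0 // => j hj.
by rewrite hD ?mul0r // eq_sym.
Qed.

Lemma ipZ n (t : 'cV[C]_n) (c : C) : ip t (c *: t) = c * ip t t.
Proof. by rewrite /ip -scalemxAr mxE. Qed.

Section Core.
Variables (n : nat) (Q D : 'M[C]_n).
Hypotheses (hQ1 : adjmx Q = Q) (hQ2 : Q *m Q = Q) (hD : is_diag_mx D)
  (hD0 : forall i, 0 <= D i i).

Let A := Q *m D *m Q.

Lemma adjD : adjmx D = D.
Proof.
apply/matrixP=> i j; rewrite !mxE; have [->|hij] := eqVneq i j.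
  by rewrite conj_ge0_id.
by move/is_diag_mxP: hD => hD'; rewrite !hD' ?conjc0 // eq_sym.
Qed.

Lemma adjA : adjmx A = A.
Proof. by rewrite /A !adjmxM hQ1 adjD mulmxA. Qed.

Lemma QA : Q *m A = A.
Proof. by rewrite /A !mulmxA hQ2. Qed.

Lemma AQ : A *m Q = A.
Proof. by rewrite /A -mulmxA hQ2. Qed.

Lemma A_psd (t : 'cV[C]_n) : 0 <= ip t (A *m t).
Proof.
rewrite /ip /A -!mulmxA mulmxA -[X in adjmx t *m X]hQ1 -adjmxM.
set s := Q *m t.
rewrite mxE; apply: sumr_ge0 => i _.
rewrite mul_diag_l // !mxE [D i i * _]mulrC mulrA mulrC.
by apply: mulr_ge0; [exact: hD0 | rewrite mulrC mulcJ_ge0].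
Qed.

Lemma MP_QL (B Y : 'M[C]_n) : adjmx B = B -> Q *m B = B -> is_MPinv B Y -> Q *m Y = Y.
Proof.
move=> hB hQB hY; have h := MP_id1 hY; rewrite hB in h.
by rewrite h !mulmxA hQB.
Qed.

Lemma MP_QR (B Y : 'M[C]_n) : adjmx B = B -> B *m Q = B -> is_MPinv B Y -> Y *m Q = Y.
Proof.
move=> hB hBQ hY; have h := MP_id2 hY; rewrite hB in h.
by rewrite h -mulmxA hBQ.
Qed.

Lemma MDM0 (M : 'M[C]_n) : M *m D *m adjmx M = 0 -> M *m D = 0.
Proof.
move=> hM.
apply/matrixP => i k; rewrite mul_diag_r // [RHS]mxE.
have := congr1 (fun N : 'M[C]_n => N i i) hM; rewrite [in RHS]mxE mxE => Hs.
have Hpos : forall j : 'I_n, true -> 0 <= (M *m D) i j * adjmx M j i.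
  move=> j _; rewrite mul_diag_r // !mxE mulrC mulrA; apply: mulr_ge0 => //.
  by rewrite mulrC mulcJ_ge0.
have := Num.Theory.psumr_eq0P Hpos Hs (i:=k) isT.
rewrite mul_diag_r // !mxE => /eqP; rewrite mulf_eq0 conjc_eq0 => /orP[/eqP //|/eqP ->].
by rewrite mul0r.
Qed.

Lemma L7 : Q *m D = A *m MPinv A *m Q *m D.
Proof.
set X := MPinv A; have hX := MPinvP A.
set Rm := 1%:M - A *m X.
have hRA : Rm *m A = 0.
  by case: hX => h1 _ _ _; rewrite /Rm mulmxBl mul1mx h1 subrr.
set M := Rm *m Q.
have hM : M *m D *m adjmx M = Rm *m A *m adjmx Rm.
  by rewrite /M /A adjmxM hQ1 !mulmxA.
rewrite hRA mul0mx in hM.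
have MD0 : M *m D = 0 by apply: MDM0.
have : (Q *m D - A *m X *m Q *m D) = 0.
  by rewrite -MD0 /M /Rm mulmxBl mul1mx mulmxBl.
by move/eqP; rewrite subr_eq0 => /eqP.
Qed.

Section Eps.
Variable e : R.
Hypothesis e0 : 0 < e.
Let A' := A + e%:C *: Q.

Lemma adjA' : adjmx A' = A'.
Proof. by rewrite /A' adjmxD adjA adjmxZr hQ1. Qed.

Lemma QA' : Q *m A' = A'.
Proof. by rewrite /A' mulmxDr QA -scalemxAr hQ2. Qed.

Lemma A'Q : A' *m Q = A'.
Proof. by rewrite /A' mulmxDl AQ -scalemxAl hQ2. Qed.

Lemma YA' Y : is_MPinv A' Y -> Y *m A' = Q.
Proof.
move=> hY.
have QY : Q *m Y = Y by apply: (MP_QL adjA' QA' hY).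
set T := Q - Y *m A'.
have hAT : A' *m T = 0.
  case: hY => h1 _ _ _.
  by rewrite /T mulmxBr A'Q mulmxA h1 subrr.
have hQT : Q *m T = T by rewrite /T mulmxBr hQ2 mulmxA QY.
have Tz : forall z : 'cV[C]_n, T *m z = 0.
  move=> z; set t := T *m z.
  have hQt : Q *m t = t by rewrite /t mulmxA hQT.
  have hAt : A *m t = (- e%:C) *: t.
    have : A' *m t = 0 by rewrite /t mulmxA hAT mul0mx.
    rewrite /A' mulmxDl -scalemxAl hQt => /eqP; rewrite addr_eq0 => /eqP ->.
    by rewrite scaleNr.
  have := A_psd t; rewrite hAt ipZ mulNr oppr_ge0 pmulr_rle0; last by rewrite ltcR.
  move=> hle; apply: ip_eq0; apply/le_anti; rewrite hle ip_ge0 //.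
have T0 : T = 0.
  apply/matrixP => i j; have := Tz (delta_mx j 0); rewrite -colE => /matrixP /(_ i 0).
  by rewrite !mxE.
by apply/esym/eqP; rewrite -subr_eq0 -/T T0.
Qed.

Lemma A'Y Y : is_MPinv A' Y -> A' *m Y = Q.
Proof.
move=> hY; have hY' := MP_adj hY; rewrite adjA' in hY'.
have := YA' hY'; move/(congr1 (@adjmx _ _ _)); rewrite adjmxM adjmxK adjA' hQ1 //.
Qed.

Lemma bound Y (u : 'cV[C]_n) : is_MPinv A' Y -> Q *m u = u ->
  e ^+ 2 * nsqR (Y *m u) <= nsqR u.
Proof.
move=> hY hQu; set t := Y *m u.
have hu : u = A *m t + e%:C *: t.
  have QY : Q *m Y = Y by apply: (MP_QL adjA' QA' hY).
  rewrite -{1}hQu -{1}(A'Y hY) -mulmxA /A' mulmxDl -scalemxAl. by rewrite (mulmxA Q) QY.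
rewrite -lecR rmorphM rmorphXn /= !nsqRE.
have E : ip u u = e%:C ^+ 2 * ip t t +
   (ip (A *m t) (A *m t) + e%:C * ip t (A *m t) + e%:C * ip t (A *m t)).
  rewrite {1 2}hu /ip adjmxD adjmxZr mulmxDl !mulmxDr -!scalemxAl -!scalemxAr.
  rewrite adjmxM adjA -[adjmx t *m A *m t]mulmxA scalerA.
  set M1 := adjmx t *m A *m (A *m t); set M2 := adjmx t *m (A *m t).
  set M3 := adjmx t *m t.
  clearbody M1 M2 M3; rewrite !mxE; ring.
rewrite E lerDl; apply: addr_ge0; [apply: addr_ge0|]; rewrite ?ip_ge0 //.
  by apply: mulr_ge0; [rewrite ler0c ltW | exact: A_psd].
by apply: mulr_ge0; [rewrite ler0c ltW | exact: A_psd].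
Qed.

Lemma A'E : Q *m (D + e%:C%:M) *m Q = A'.
Proof.
by rewrite /A' /A mulmxDr mulmxDl mul_mx_scalar -scalemxAl hQ2.
Qed.

Lemma main_id (x : 'cV[C]_n) :
  let u := Q *m (adjmx (MPinv A) *m MPinv A *m (Q *m D *m (1%:M - Q) *m x)) in
  (Q + MPinv A *m D *m (1%:M - Q)) *m x =
  (Q + MPinv A' *m (D + e%:C%:M) *m (1%:M - Q)) *m x
    + e%:C *: (u - e%:C *: (MPinv A' *m u)).
Proof.
move=> u.
set X := MPinv A; set X' := MPinv A'.
have hX : is_MPinv A X := MPinvP A.
have hX' : is_MPinv A' X' := MPinvP A'.
have XQ : X *m Q = X := MP_QR adjA AQ hX.
have QX : Q *m X = X := MP_QL adjA QA hX.
have X'Q : X' *m Q = X' := MP_QR adjA' A'Q hX'.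
have X'A : X' *m A = Q - e%:C *: X'.
  have h := YA' hX'; rewrite /A' mulmxDr -scalemxAr X'Q in h.
  by rewrite -h addrK.
set y := Q *m D *m (1%:M - Q) *m x.
have hy : y = A *m (X *m y).
  by rewrite /y {1}L7 !mulmxA.
have hQu : Q *m u = u by rewrite /u mulmxA hQ2.
have E1 : (Q + X *m D *m (1%:M - Q)) *m x = Q *m x + X *m y.
  by rewrite mulmxDl; congr (_ + _); rewrite /y -{1}XQ !mulmxA.
have E2 : (Q + X' *m (D + e%:C%:M) *m (1%:M - Q)) *m x = Q *m x + X' *m y.
  rewrite mulmxDl; congr (_ + _).
  rewrite (mulmxDr X' D) mul_mx_scalar mulmxDl.
  have -> : e%:C *: X' *m (1%:M - Q) = 0.
    by rewrite -scalemxAl mulmxDr mulmxN mulmx1 X'Q subrr scaler0.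
  by rewrite addr0 /y -{1}X'Q !mulmxA.
have E3 : X' *m y = X *m y - e%:C *: (X' *m (X *m y)).
  rewrite {1}hy. rewrite mulmxA. rewrite X'A. rewrite mulmxBl. rewrite -scalemxAl. rewrite (mulmxA Q). rewrite QX. done.
have E4 : X *m y = A *m u.
  by rewrite {1}(MP_id1 hX) adjA /u (mulmxA A Q) AQ !mulmxA.
have E5 : X' *m (A *m u) = u - e%:C *: (X' *m u).
  rewrite mulmxA. rewrite X'A. rewrite mulmxBl. rewrite -scalemxAl. rewrite hQu. reflexivity.
rewrite E1 E2 E3 E4 E5.
by rewrite -addrA subrK.
Qed.

Lemma core_e (x u : 'cV[C]_n) : e <= 1 ->
  u = Q *m (adjmx (MPinv A) *m MPinv A *m (Q *m D *m (1%:M - Q) *m x)) ->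
  nsqR ((Q + MPinv A *m D *m (1%:M - Q)) *m x) <=
  (1 + e) * nsqR ((Q + MPinv A' *m (D + e%:C%:M) *m (1%:M - Q)) *m x)
    + e * (8 * nsqR u).
Proof.
move=> e1 hu; rewrite main_id -hu.
set X' := MPinv A'; have hX' : is_MPinv A' X' := MPinvP A'.
have hQu : Q *m u = u by rewrite hu mulmxA hQ2.
have hb := bound hX' hQu.
have h1 : nsqR (u - e%:C *: (X' *m u)) <= 4 * nsqR u.
  rewrite -scaleNr -rmorphN.
  apply: (le_trans (nsqR_young _ _ ltr01)).
  rewrite nsqR_scale sqrrN invr1.
  have := nsqR_ge0 u; lra.
apply: (le_trans (nsqR_young _ _ e0)).
rewrite nsqR_scale.
set p := nsqR ((Q + _) *m x); set K0 := nsqR u.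
have K00 : 0 <= K0 := nsqR_ge0 u.
have hinv : (1 + e^-1) * e ^+ 2 = e ^+ 2 + e by field; rewrite gt_eqF.
have h2 : (1 + e^-1) * (e ^+ 2 * nsqR (u - e%:C *: (X' *m u))) <= (e ^+ 2 + e) * (4 * K0).
  rewrite [X in X <= _]mulrA hinv; apply: ler_wpM2l => //.
  by rewrite addr_ge0 // ?sqr_ge0 // ltW.
have hh : 0 <= e * K0 * (1 - e) by rewrite !mulr_ge0 // ?subr_ge0 // ltW.
have h3 : (e ^+ 2 + e) * (4 * K0) <= e * (8 * K0) by nra.
lra.
Qed.

End Eps.
End Core.
End S.

Lemma orthoprojP (R : realType) n (S : {vspace 'cV[complex R]_n}) :
  adjmx (orthoproj S) = orthoproj S /\ orthoproj S *m orthoproj S = orthoproj S.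
Proof.
rewrite /orthoproj; case: pselect => [h|_].
  by case: (projT2 (cid h)).
by split; apply/matrixP => i j; rewrite !mxE ?conjc0 // big1 // => k _; rewrite mxE mul0r.
Qed.

Lemma PDSE (R : realType) n (S : {vspace 'cV[complex R]_n}) D :
  PDS D S = orthoproj S + MPinv (orthoproj S *m D *m orthoproj S) *m D *m (1%:M - orthoproj S).
Proof. by []. Qed.

Local Open Scope classical_set_scope.
Unset Implicit Arguments.

Theorem proposition3p6 (R : realType) (n : nat)
    (S : {vspace 'cV[complex R]_n}) :
  ereal_sup [set opnorm (PDS D S) | D in [set D : 'M[complex R]_n | posdef_diag D]]
  = ereal_sup [set opnorm (PDS D S) | D in [set D : 'M[complex R]_n | psd_diag D]].
Proof.
have [hQ1 hQ2] := orthoprojP S.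
apply/eqP; rewrite eq_le; apply/andP; split.
  apply: ereal_sup_le => _ [D [hd hp] <-]; exists D => //; split => // i.
  exact: ltW (hp i).
apply: ge_ereal_sup => _ [D [hd hp] <-].
rewrite /opnorm; apply: ge_ereal_sup => _ [x hx <-].
set Sup := ereal_sup _.
have Dpos : forall e : R, 0 < e -> posdef_diag (D + e%:C%:M).
  move=> e e0; split.
    have /is_diag_mxP hd' := hd.
    apply/is_diag_mxP => i j hij; rewrite !mxE hd' //.
    have -> : (i == j) = false by apply/negbTE; move: hij; apply: contra => /eqP ->.
    by rewrite mulr0n addr0.
  move=> i; rewrite !mxE eqxx mulr1n.
  by apply: ltr_wpDl; [exact: hp | rewrite ltcR].
have hle : forall e : R, 0 < e ->
    ((vnorm (PDS (D + e%:C%:M) S *m x))%:E <= Sup)%E.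
  move=> e e0; apply: (@le_trans _ _ (opnorm (PDS (D + e%:C%:M) S))).
    by apply: ereal_sup_ubound; exists x.
  by apply: ereal_sup_ubound; exists (D + e%:C%:M) => //; exact: Dpos.
set Q := orthoproj S.
set u := Q *m (adjmx (MPinv (Q *m D *m Q)) *m MPinv (Q *m D *m Q) *m (Q *m D *m (1%:M - Q) *m x)).
have hcore : forall e : R, 0 < e -> e <= 1 ->
    nsqR (PDS D S *m x) <= (1 + e) * nsqR (PDS (D + e%:C%:M) S *m x) + e * (8 * nsqR u).
  move=> e e0 e1; rewrite !PDSE -/Q.
  have := core_e hQ1 hQ2 hd hp e0 e1 (erefl u).
  by rewrite -A'E.
have h1 := hle 1 ltr01.
move: hle h1; case: Sup => [r| |] hle h1; last 2 first.
- exact: leey.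
- by move: h1; rewrite leNgt ltNyr.
rewrite lee_fin.
have r0 : 0 <= r by apply: le_trans (vnorm_ge0 _) _; rewrite -lee_fin; exact: h1.
have key : nsqR (PDS D S *m x) <= r ^+ 2.
  apply: (lim_le (sqr_ge0 r) (K := 8 * nsqR u)).
    by rewrite mulr_ge0 // nsqR_ge0.
  move=> e e0 e1; apply: (le_trans (hcore e e0 e1)).
  apply: lerD => //; apply: ler_wpM2l; first by rewrite addr_ge0 // ltW.
  rewrite -vnorm_sq; have := hle e e0; rewrite lee_fin => hv.
  have := vnorm_ge0 (PDS (D + e%:C%:M) S *m x); nra.
rewrite -vnorm_sq in key.
have := vnorm_ge0 (PDS D S *m x); nra.
Qed.
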